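(* For every integer $d\ge1$ there exists a $(d+1)$-colored tiling of $\mathbb{R}^d$ all of whose tiles have volume at most $1$ and whose minimal distance is at least $\dfrac{1}{1+2(d-1)\sqrt2}$. In particular, $d+1$ colors suffice for a colored tiling of $\mathbb{R}^d$ by bounded tiles with positive minimal distance.
   Context: A $k$-colored tiling of $\mathbb{R}^d$ is a locally finite collection of closed bounded connected tiles covering $\mathbb{R}^d$, distinct tiles intersecting only in their boundaries, each tile assigned one of $k$ colors. The minimal distance is the infimum of the Euclidean distances $|x-y|$ over $x\in T_i$, $y\in T_j$ with $i\neq j$ and $T_i,T_j$ of the same color. *)

(* Defs.v *)
From HB Require Import structures.
From mathcomp Require Import all_boot all_order all_algebra.
From mathcomp Require Import all_classical all_reals all_analysis.
Set Implicit Arguments. Unset Strict Implicit. Unset Printing Implicit Defensive.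
Import Order.TTheory GRing.Theory Num.Theory.
Import numFieldNormedType.Exports.
Local Open Scope classical_set_scope.
Local Open Scope ring_scope.

Section Tilings.
Variables (R : realType) (d : nat).

(* Points of R^d are row vectors 'rV[R]_d (product topology = Euclidean one). *)
Definition euclid_dist (x y : 'rV[R]_d) : R :=
  Num.sqrt (\sum_(i < d) (x ord0 i - y ord0 i) ^+ 2).

Definition boundary (A : set 'rV[R]_d) : set 'rV[R]_d :=
  closure A `\` interior A.

(* Lebesgue (outer) measure on R^d: infimum of total volumes of countable
   covers by closed boxes [a n, b n]. *)
Definition box (a b : 'rV[R]_d) : set 'rV[R]_d :=
  [set x | forall i, a ord0 i <= x ord0 i <= b ord0 i].

Definition volume (A : set 'rV[R]_d) : \bar R :=
  ereal_inf [set s | exists a b : nat -> 'rV[R]_d,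
    (forall n i, a n ord0 i <= b n ord0 i) /\
    A `<=` \bigcup_n box (a n) (b n) /\
    s = (\sum_(0 <= n <oo) (\prod_(i < d) (b n ord0 i - a n ord0 i))%:E)%E].

Definition colored_tiling (k : nat) (I : Type) (T : I -> set 'rV[R]_d)
    (c : I -> 'I_k) : Prop :=
  (forall i, closed (T i) /\ bounded_set (T i) /\ connected (T i)) /\
  (\bigcup_i T i = setT) /\
  (forall i j, i <> j -> T i `&` T j `<=` boundary (T i) `&` boundary (T j)) /\
  (forall x : 'rV[R]_d, exists U, nbhs x U /\ finite_set [set i | T i `&` U !=set0]).

(* Minimal distance: infimum (in the extended reals; +oo if no pair) of the
   Euclidean distances between points of distinct tiles of the same color. *)
Definition min_dist (k : nat) (I : Type) (T : I -> set 'rV[R]_d)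
    (c : I -> 'I_k) : \bar R :=
  ereal_inf [set r | exists i j x y, i <> j /\ c i = c j /\ T i x /\ T j y /\
                       r = (euclid_dist x y)%:E].

End Tilings.

(* Main.v *)
Require Import Defs.
From HB Require Import structures.
From mathcomp Require Import all_boot all_order all_algebra.
From mathcomp Require Import all_classical all_reals all_analysis.
From mathcomp Require Import ring lra zify.
Import Order.TTheory GRing.Theory Num.Theory.
Import numFieldNormedType.Exports.
Local Open Scope classical_set_scope.
Local Open Scope ring_scope.

Section C.
Variables (R : realType) (d : nat).
Hypothesis d1 : (1 <= d)%N.

Definition eps : R := (d%:R)^-1.
Definition Ssum (k : 'I_d -> int) (j : 'I_d) : int := \sum_(l < d | (j < l)%N) k l.

Lemma eps_gt0 : 0 < eps.
Proof. by rewrite /eps invr_gt0 ltr0n; case: d d1. Qed.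

Lemma eps_mul : eps * d%:R = 1.
Proof. by rewrite /eps mulVf // pnatr_eq0 -lt0n. Qed.

Lemma eps_le1 : eps <= 1.
Proof. by rewrite /eps invf_le1 ?ler1n ?ltr0n //; case: d d1. Qed.

Lemma card_gt (j : 'I_d) : (#|[pred l : 'I_d | (j < l)%N]| <= d.-1)%N.
Proof.
have -> : d.-1 = #|[pred l : 'I_d | l != j]| by rewrite cardC1 card_ord.
apply: subset_leq_card; apply/fintype.subsetP => l /=.
by rewrite !inE; apply: contraTN => /eqP ->; rewrite ltnn.
Qed.

Lemma Ssum_bound (D : 'I_d -> int) (j : 'I_d) :
  (forall l : 'I_d, (j < l)%N -> 0 <= D l <= 1) -> 0 <= Ssum D j <= (d%:Z - 1).
Proof.
move=> H; apply/andP; split.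
  by apply: sumr_ge0 => l /H /andP[].
apply: (@le_trans _ _ (\sum_(l < d | (j < l)%N) (1:int))).
  by apply: ler_sum => l /H /andP[].
rewrite sumr_const; have := card_gt j; move: #|_| => n hn.
rewrite natz; lia.
Qed.

Lemma step_pos (D : 'I_d -> int) (j : 'I_d) :
  (forall l : 'I_d, (j < l)%N -> 0 <= D l <= 1) ->
  `|(D j)%:~R - eps * (Ssum D j)%:~R| < 1 + eps :> R ->
  (0 <= D j <= 1) \/ (D j = -1 /\ forall l : 'I_d, (j < l)%N -> D l = 0).
Proof.
move=> H; have /andP[s0 s1] := @Ssum_bound D j H.
rewrite ltr_norml => /andP[h1 h2].
have e0 := eps_gt0; have e1 := eps_le1.
have [s_eq0|s_pos] := eqVneq (Ssum D j) 0.
  rewrite s_eq0 mulr0 subr0 in h1 h2.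
  have a1 : ((-2)%:~R : R) < (D j)%:~R by rewrite (_ : (-2)%:~R = -2 :> R); [lra|by rewrite rmorphN].
  have a2 : (D j)%:~R < ((2:int)%:~R : R) by rewrite (_ : (2:int)%:~R = 2 :> R); [lra|by []].
  rewrite ltr_int in a1; rewrite ltr_int in a2.
  have [dj0|djn] := lerP 0 (D j); first by left; lia.
  right; split; first lia.
  move=> l hl; apply: (psumr_eq0P _ s_eq0) => // i /H /andP[] //.
have t1 : eps <= eps * (Ssum D j)%:~R.
  by rewrite ler_peMr ?(ltW e0) // ler1z; lia.
have t2 : eps * (Ssum D j)%:~R <= 1 - eps.
  have -> : 1 - eps = eps * (d%:R - 1) by rewrite mulrBr mulr1 eps_mul.
  apply: ler_wpM2l; first exact: ltW.
  have : (Ssum D j) <= d%:Z - 1 by [].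
  by rewrite -(ler_int R) rmorphB /= -!pmulrn.
left.
have a1 : ((-1)%:~R : R) < (D j)%:~R by rewrite (_ : (-1)%:~R = -1 :> R); [lra|by rewrite rmorphN].
have a2 : (D j)%:~R < ((2:int)%:~R : R) by rewrite (_ : (2:int)%:~R = 2 :> R); [lra|by []].
rewrite ltr_int in a1; rewrite ltr_int in a2; lia.
Qed.

Lemma Ssum_opp (D : 'I_d -> int) j : Ssum (fun l => - D l) j = - Ssum D j.
Proof. by rewrite /Ssum sumrN. Qed.

Lemma coh (D : 'I_d -> int) :
  (forall j, `|(D j)%:~R - eps * (Ssum D j)%:~R| < 1 + eps :> R) ->
  (forall j, 0 <= D j <= 1) \/ (forall j, -1 <= D j <= 0).
Proof.
move=> H.
suff: forall n, (n <= d)%N ->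
    (forall l : 'I_d, (d - n <= l)%N -> 0 <= D l <= 1) \/
    (forall l : 'I_d, (d - n <= l)%N -> -1 <= D l <= 0).
  move=> /(_ d (leqnn d)); rewrite subnn; case=> h; [left|right] => l; exact: h.
elim=> [_|n IH hn].
  left => l; rewrite subn0 => hl; have := ltn_ord l; lia.
have hj : (d - n.+1 < d)%N by lia.
pose j := Ordinal hj.
have hl' : forall l : 'I_d, (d - n.+1 <= l)%N -> l = j \/ ((j < l)%N /\ (d - n <= l)%N).
  move=> l hl; case: (eqVneq l j) => [->|ne]; [by left|right].
  have : val l != val j by [].
  rewrite /= in hl *; lia.
have hup : forall l : 'I_d, (j < l)%N -> (d - n <= l)%N by move=> l /=; lia.
case: (IH (ltnW hn)) => [hA|hB].
- have := @step_pos D j (fun l hl => hA l (hup l hl)) (H j).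
  case=> [hj0|[hj1 h0]]; [left|right] => l /hl' [->|[hjl hdl]] //.
  + exact: hA.
  + by rewrite hj1.
  + by rewrite h0.
- have HN : `|(- D j)%:~R - eps * (Ssum (fun l => - D l) j)%:~R| < 1 + eps :> R.
    rewrite Ssum_opp !rmorphN /= mulrN opprK -normrN opprD opprK; exact: (H j).
  have hB2 : forall l : 'I_d, (j < l)%N -> 0 <= - D l <= 1.
    move=> l /hup /hB /andP[a b]; apply/andP; split; lia.
  have := @step_pos (fun l => - D l) j hB2 HN.
  case=> [hj0|[hj1 h0]]; [right|left] => l /hl' [->|[hjl hdl]] //.
  + move: hj0 => /andP[a b]; apply/andP; split; lia.
  + exact: hB.
  + have -> : D j = 1 by lia.
    by [].
  + have := h0 l hjl; move=> e; apply/andP; split; lia.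
Qed.

Lemma sum_zero_pos (D : 'I_d -> int) : (forall j, 0 <= D j <= 1) ->
  (d.+1%:Z %| \sum_l D l)%Z -> forall l, D l = 0.
Proof.
move=> H /dvdzP [q hq].
have s0 : 0 <= \sum_l D l by apply: sumr_ge0 => l _; case/andP: (H l).
have s1 : \sum_l D l <= d%:Z.
  apply: (@le_trans _ _ (\sum_(l < d) (1:int))).
    by apply: ler_sum => l _; case/andP: (H l).
  by rewrite sumr_const card_ord natz.
have e0 : \sum_l D l = 0.
  rewrite hq in s0 s1 *; have [qn|qp|->] := ltgtP q 0; last by rewrite mul0r.
    have : q * d.+1%:Z < 0 by rewrite pmulr_llt0.
    lia.
  have : d.+1%:Z <= q * d.+1%:Z by rewrite ler_peMl // ; lia.
  lia.
move=> l; apply: (psumr_eq0P _ e0) => // i _; by case/andP: (H i).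
Qed.

Lemma all_zero (D : 'I_d -> int) :
  (forall j, `|(D j)%:~R - eps * (Ssum D j)%:~R| < 1 + eps :> R) ->
  (d.+1%:Z %| \sum_l D l)%Z -> forall l, D l = 0.
Proof.
move=> /coh [H|H] hd.
  exact: sum_zero_pos.
have H' : forall j, 0 <= - D j <= 1 by move=> j; case/andP: (H j) => a b; apply/andP; split; lia.
have hd' : (d.+1%:Z %| \sum_l - D l)%Z by apply/dvdzP; case/dvdzP: hd => q hq; exists (-q); rewrite sumrN hq mulNr.
move=> l; have := @sum_zero_pos (fun l => - D l) H' hd' l; lia.
Qed.

Definition cor (k : 'I_d -> int) (j : 'I_d) : R := (k j)%:~R - eps * (Ssum k j)%:~R.
Definition tileab (a : 'I_d -> R) : set 'rV[R]_d :=
  [set x | forall i, a i <= x ord0 i <= a i + 1].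
Definition tile k := tileab (cor k).
Definition col (k : 'I_d -> int) : 'I_d.+1 :=
  inord (absz ((\sum_l k l) %% d.+1%:Z)%Z).

Lemma cor_diff k k' j : cor k j - cor k' j =
  ((fun l => k l - k' l) j)%:~R - eps * (Ssum (fun l => k l - k' l) j)%:~R.
Proof. rewrite /cor /Ssum sumrB !rmorphB /=; ring. Qed.

Lemma col_eq k k' : col k = col k' -> (d.+1%:Z %| \sum_l (k l - k' l))%Z.
Proof.
have hlt m : (absz ((m %% d.+1%:Z)%Z) < d.+1)%N.
  have := @ltz_pmod m d.+1%:Z isT; have := @modz_ge0 m d.+1%:Z isT; lia.
rewrite /col => he0; have := congr1 (@nat_of_ord _) he0; rewrite !inordK // => he.
rewrite sumrB -eqz_mod_dvd; apply/eqP.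
have := @modz_ge0 (\sum_l k l) d.+1%:Z isT; have := @modz_ge0 (\sum_l k' l) d.+1%:Z isT.
lia.
Qed.

Lemma coord_le_euclid (x y : 'rV[R]_d) j : `|x ord0 j - y ord0 j| <= euclid_dist x y.
Proof.
rewrite /euclid_dist -sqrtr_sqr ler_sqrt; last first.
  by apply: sumr_ge0 => i _; exact: sqr_ge0.
rewrite (bigD1 j) //= lerDl; apply: sumr_ge0 => i _; exact: sqr_ge0.
Qed.

Lemma dist_ge k k' x y : k <> k' -> col k = col k' -> tile k x -> tile k' y ->
  eps <= euclid_dist x y.
Proof.
move=> kk hc tx ty; rewrite leNgt; apply/negP => hlt; apply: kk.
apply: funext => l.
have H : forall j, `|((fun l => k l - k' l) j)%:~R -
    eps * (Ssum (fun l => k l - k' l) j)%:~R| < 1 + eps :> R.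
  move=> j; rewrite -cor_diff.
  have hxy := le_lt_trans (coord_le_euclid x y j) hlt.
  move: (tx j) (ty j) => /andP[a1 a2] /andP[b1 b2].
  move: hxy; rewrite !ltr_norml => /andP[c1 c2]; apply/andP; split; lra.
have := @all_zero (fun l => k l - k' l) H (@col_eq k k' hc) l => /= /eqP; rewrite subr_eq0 => /eqP //.
Qed.

Lemma Ssum_eq k k' (j : 'I_d) : (forall l : 'I_d, (j < l)%N -> k l = k' l) ->
  Ssum k j = Ssum k' j.
Proof. by move=> H; apply: eq_bigr => l /H. Qed.

Lemma down_ind (P : 'I_d -> Prop) :
  (forall j : 'I_d, (forall l : 'I_d, (j < l)%N -> P l) -> P j) -> forall j, P j.
Proof.
move=> H.
suff: forall n (j : 'I_d), (d - j <= n)%N -> P j.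
  by move=> /(_ d) h j; apply: h; lia.
elim=> [|n IH] j hj.
  have := ltn_ord j; lia.
apply: H => l hl; apply: IH; lia.
Qed.

Lemma cover (x : 'rV[R]_d) : exists k, tile k x.
Proof.
suff: forall n, (n <= d)%N -> exists k, forall j : 'I_d, (d - n <= j)%N ->
    cor k j <= x ord0 j <= cor k j + 1.
  by move=> /(_ d (leqnn d)) [k hk]; exists k => j; apply: hk; lia.
elim=> [_|n IH hn].
  by exists (fun=> 0) => j; have := ltn_ord j; lia.
have [k hk] := IH (ltnW hn).
have hj : (d - n.+1 < d)%N by lia.
pose j0 := Ordinal hj.
pose v := Num.floor (x ord0 j0 + eps * (Ssum k j0)%:~R).
pose k' := fun l => if l == j0 then v else k l.
have hS : forall j : 'I_d, (j0 <= j)%N -> Ssum k' j = Ssum k j.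
  move=> j hj'; apply: Ssum_eq => l hl; rewrite /k'; case: eqP => // e.
  by move: hl hj'; rewrite e /=; lia.
exists k' => j hj'.
have [e|ne] := eqVneq j j0.
  rewrite e /cor hS // /k' eqxx.
  have := floor_le (x ord0 j0 + eps * (Ssum k j0)%:~R).
  have := floorD1_gt (x ord0 j0 + eps * (Ssum k j0)%:~R).
  rewrite -/v rmorphD /= => a b; apply/andP; split; lra.
have hj2 : (d - n <= j)%N by have : val j != val j0 by []; rewrite /= in hj' *; lia.
rewrite /cor hS; last by rewrite /=; lia.
rewrite /k' (negbTE ne); exact: hk.
Qed.

Lemma disj k k' (y : 'rV[R]_d) : tile k y ->
  (forall j, cor k' j < y ord0 j < cor k' j + 1) -> k = k'.
Proof.
move=> ty hy; apply: funext; apply: down_ind => j IH.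
have hS := @Ssum_eq k k' j IH.
move: (ty j) (hy j) => /andP[a1 a2] /andP[b1 b2].
have h1 : ((k j - k' j)%:~R : R) < (1:int)%:~R.
  by rewrite rmorphB /=; move: a1 a2 b1 b2; rewrite /cor hS; lra.
have h2 : ((-1 : int)%:~R : R) < (k j - k' j)%:~R.
  by rewrite rmorphB /= rmorphN /=; move: a1 a2 b1 b2; rewrite /cor hS; lra.
rewrite ltr_int in h1; rewrite ltr_int in h2; lia.
Qed.

Lemma not_interior k k' (x : 'rV[R]_d) : k <> k' -> tile k x -> tile k' x -> ~ (tile k)^° x.
Proof.
move=> kk tx tx' /nbhs_ballP [e /= e0 he]; apply: kk.
pose t := e / (e + 1).
have tE : t * (e + 1) = e by rewrite /t divfK //; apply: lt0r_neq0; lra.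
have t0 : 0 < t by rewrite /t divr_gt0 //; lra.
have t1 : t < 1 by nra.
have te : t < e by nra.
pose y : 'rV[R]_d := \row_j (x ord0 j + t * (cor k' j + 2^-1 - x ord0 j)).
apply: (@disj k k' y).
  apply: he; split => // i j; rewrite ord1 /ball /= !mxE.
  move: (tx' j) => /andP[a1 a2].
  rewrite ltr_norml; apply/andP; split; nra.
move=> j; rewrite mxE; move: (tx' j) => /andP[a1 a2].
apply/andP; split; nra.
Qed.

Lemma coord_le_sum (x : 'rV[R]_d) j : `|x ord0 j| <= \sum_i `|x ord0 i|.
Proof. by rewrite (bigD1 j) //= lerDl; apply: sumr_ge0 => i _. Qed.

Lemma kbound k (x y : 'rV[R]_d) : tile k y -> (forall j, `|x ord0 j - y ord0 j| < 1) ->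
  forall j, `|(k j)%:~R : R| <= d%:R * (2 + \sum_i `|x ord0 i|).
Proof.
set M := 2 + _ => ty hxy.
have M0 : 0 <= M by rewrite /M; apply: addr_ge0 => //; apply: sumr_ge0.
have hd : d%:R = (d.-1)%:R + 1 :> R by rewrite natr1 prednK.
apply: down_ind => j IH.
have h1 : `|cor k j| <= M.
  move: (ty j) (hxy j) (coord_le_sum x j) => /andP[a1 a2].
  rewrite /M !ltr_norml !ler_norml => /andP[b1 b2] /andP[c1 c2]; apply/andP; split; lra.
have h2 : `|(Ssum k j)%:~R : R| <= d%:R * M * (d.-1)%:R.
  rewrite /Ssum rmorph_sum /=; apply: le_trans (ler_norm_sum _ _ _) _.
  apply: (@le_trans _ _ (\sum_(l < d | (j < l)%N) (d%:R * M))).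
    by apply: ler_sum => l /IH.
  rewrite sumr_const -(mulr_natr (d%:R * M)); apply: ler_wpM2l.
    by apply: mulr_ge0 => //.
  by rewrite ler_nat; exact: card_gt.
have e : (k j)%:~R = cor k j + eps * (Ssum k j)%:~R :> R by rewrite /cor; ring.
rewrite e; apply: le_trans (ler_normD _ _) _; rewrite normrM (ger0_norm (ltW eps_gt0)).
have h3 := ler_wpM2l (ltW eps_gt0) h2.
have h4 : eps * (d%:R * M * (d.-1)%:R) = M * (d.-1)%:R by rewrite !mulrA eps_mul mul1r.
have h5 : d%:R * M = M + M * (d.-1)%:R by rewrite hd; ring.
lra.
Qed.

Lemma fin_bound (N : nat) :
  finite_set [set k : 'I_d -> int | forall j, -(N%:Z) <= k j <= N%:Z].
Proof.
pose g := fun f : {ffun 'I_d -> 'I_(N + N).+1} => fun j => ((f j : nat)%:Z - N%:Z).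
apply: (@sub_finite_set _ _ (g @` setT)); last exact/finite_image/finite_finset.
move=> k hk; exists [ffun j => inord (absz (k j + N%:Z))] => //.
apply: funext => j; rewrite /g ffunE inordK; have := hk j; lia.
Qed.

Lemma loc_fin (x : 'rV[R]_d) :
  exists U, nbhs x U /\ finite_set [set k | tile k `&` U !=set0].
Proof.
exists (ball x 1); split; first by apply/nbhs_ballP; exists 1 => //=.
set M := 2 + \sum_i `|x ord0 i|.
have M0 : 0 <= d%:R * M by apply: mulr_ge0 => //; rewrite /M; apply: addr_ge0 => //; apply: sumr_ge0.
have hN := archi_boundP M0; set N := Num.Def.archi_bound _ in hN.
apply: (sub_finite_set _ (fin_bound N)) => k [y [ty hy]] j.
have hxy : forall j, `|x ord0 j - y ord0 j| < 1.
  by move=> i; case: hy => _ /(_ ord0 i).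
have := @kbound k x y ty hxy j; rewrite -/M => hb.
have : `|(k j)%:~R : R| <= (N%:Z)%:~R by rewrite (le_trans hb) // ltW.
rewrite ler_norml -rmorphN /= !ler_int //.
Qed.

Lemma tile_volume k : (volume (tile k) <= 1)%E.
Proof.
pose c : 'rV[R]_d := \row_j cor k j.
pose a := fun n : nat => if n == 0%N then c else 0.
pose b := fun n : nat => if n == 0%N then c + const_mx 1 else 0.
pose F := fun n => (\prod_(i < d) (b n ord0 i - a n ord0 i))%:E.
apply: (@le_trans _ _ (\sum_(0 <= n <oo) F n)%E).
  apply: ereal_inf_lbound; exists a, b; split.
    by move=> n i; rewrite /a /b; case: eqP => _; rewrite ?mxE // lerDl.
  split => //.
  move=> x tx; exists 0%N => // i; rewrite /a /b /= !mxE; exact: tx.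
have F0 : forall n, (0 <= F n)%E.
  move=> n; rewrite lee_fin; apply: prodr_ge0 => i _; rewrite subr_ge0 /a /b.
  by case: eqP => _; rewrite ?mxE // lerDl.
rewrite nneseries_recl // eseries0; last first.
  move=> n hn _; rewrite /F /a /b; have -> : (n == 0%N) = false by case: n hn.
  rewrite (eq_bigr (fun=> 0)); last by move=> i _; rewrite subrr.
  by rewrite prodr_const card_ord expr0n; case: d d1.
rewrite adde0 /F /a /b eqxx (eq_bigr (fun=> 1)); last by move=> i _; rewrite !mxE addrC addKr.
by rewrite prodr_const expr1n.
Qed.
Lemma tile_compact a : compact (tileab a).
Proof.
have -> : tileab a = [set v : 'rV[R]_d | forall i, `[a i, a i + 1]%classic (v ord0 i)].
  apply/seteqP; split => x /= H i; have := H i; by rewrite /= in_itv.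
apply: (@rV_compact R d (fun i => `[a i, a i + 1]%classic)) => i; exact: segment_compact.
Qed.

Lemma tile_closed a : closed (tileab a).
Proof. apply: compact_closed; [exact: norm_hausdorff| exact: tile_compact]. Qed.

Lemma tile_bounded a : bounded_set (tileab a).
Proof. apply: compact_bounded; exact: tile_compact. Qed.
Lemma tile_connected a : connected (tileab a).
Proof.
pose c : 'rV[R]_d := \row_i (a i + 2^-1).
pose seg (x : 'rV[R]_d) := (fun t : R => c + t *: (x - c)) @` `[0, 1]%classic.
have -> : tileab a = \bigcup_(x in tileab a) seg x.
  apply/seteqP; split => x.
    move=> Hx; exists x => //; exists 1; first by rewrite /= in_itv /= lexx ler01.
    by rewrite scale1r addrC subrK.
  move=> [y Hy [t Ht <-]] i; rewrite /= in_itv /= in Ht.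
  move/andP: Ht => [t0 t1]; rewrite !mxE.
  have := Hy i => /andP[h1 h2]; apply/andP; split; nra.
apply: bigcup_connected.
  exists c => x _; exists 0; first by rewrite /= in_itv /= lexx ler01.
  by rewrite scale0r addr0.
move=> x _; apply: connected_continuous_connected; first exact: segment_connected.
apply: continuous_subspaceT => t.
apply: (@continuousD _ _ _ (fun=> c) (fun t : R => t *: (x - c))); first exact: cst_continuous.
by apply: continuousZr_tmp; by move=> ?; apply: cvg_id.
Qed.
End C.

Theorem mainTheorem12 (R : realType) (d : nat) : (1 <= d)%N ->
  exists (I : Type) (T : I -> set 'rV[R]_d) (c : I -> 'I_d.+1),
    colored_tiling T c /\
    (forall i, (volume (T i) <= 1)%E) /\
    (((1 + 2 * (d%:R - 1) * Num.sqrt 2)^-1)%:E <= min_dist T c)%E.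
Proof.
move=> d1.
exists ('I_d -> int), (@tile R d), (@col d).
split; [|split].
- split; [|split; [|split]].
  + move=> k; split; [exact: tile_closed|split; [exact: tile_bounded|exact: tile_connected]].
  + apply/seteqP; split => // x _; have [k hk] := @cover R d d1 x; by exists k.
  + move=> k k' kk x [tx tx']; split; split.
    * exact: subset_closure.
    * exact: (@not_interior R d d1 k k' x kk tx tx').
    * exact: subset_closure.
    * by apply: (@not_interior R d d1 k' k x _ tx' tx) => e; apply: kk.
  + exact: (@loc_fin R d d1).
- move=> k; exact: (@tile_volume R d d1 k).
- rewrite /min_dist; apply: le_ereal_inf_tmp => r [k [k' [x [y [kk [hc [tx [ty ->]]]]]]]].
  rewrite lee_fin; apply: le_trans (@dist_ge R d d1 k k' x y kk hc tx ty).
  have s1 : 1 <= Num.sqrt (2 : R).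
    by rewrite -{1}sqrtr1 ler_sqrt // ler1n.
  have dd : 1 <= (d%:R : R) by rewrite ler1n.
  unfold eps; rewrite lef_pV2 ?posrE //; [nra|nra|lra].
Qed.
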